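(* For any $\alpha, \varepsilon \in (0,1]$ there exists $n_0$ such that for all $n \geq n_0$ the following holds. Let $G$ be an $n$-vertex graph with $\alpha \binom{n}{2}$ edges. Then \[\operatorname{ssp}(G) \geq (\sqrt{3 \alpha + 1} - 1 - \varepsilon)n.\]
   Context: A family $\mathcal{P}$ of paths in a graph $G$ is strong-separating if for every ordered pair of distinct edges $e,f$ of $G$ there is a path in $\mathcal{P}$ containing $e$ but not $f$; $\operatorname{ssp}(G)$ is the minimum size of such a family. *)

(* Defs.v *)
From HB Require Import structures.
From mathcomp Require Import all_boot all_order all_algebra.
From mathcomp Require Export reals.
Set Implicit Arguments. Unset Strict Implicit. Unset Printing Implicit Defensive.

Section Graphs.
Variable T : finType.

(* A simple graph on T is a symmetric irreflexive relation G : rel T.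
   Edges are unordered pairs {x,y}, represented as 2-element sets. *)
Definition edges (G : rel T) : {set {set T}} :=
  [set [set p.1; p.2] | p in [pred p : T * T | G p.1 p.2]].

Definition is_gpath (G : rel T) (p : seq T) : bool :=
  if p is x :: q then path G x q && uniq p else false.

Definition path_edges (p : seq T) : {set {set T}} :=
  [set [set q.1; q.2] | q in [pred q | q \in zip p (behead p)]].

Definition strong_separating (G : rel T) (P : seq (seq T)) : Prop :=
  (forall p, p \in P -> is_gpath G p) /\
  forall e f, e \in edges G -> f \in edges G -> e != f ->
    exists2 p, p \in P & (e \in path_edges p) && (f \notin path_edges p).

End Graphs.

(* Main.v *)
From mathcomp Require Import all_boot all_order all_algebra.
From mathcomp Require Import zify ring lra.
Require Import Defs.
From HB Require Import structures.
From mathcomp Require Import reals.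
Import Order.TTheory GRing.Theory Num.Theory.

Definition gg (n : nat) : nat := ((n == 0%N) + (n == 0%N) + (n == 0%N) + (n == 1%N) + (n == 1%N) + (n == 2%N))%N.

Lemma gg_ge n : (3 <= n + gg n)%N.
Proof. by case: n => [|[|[|n]]]. Qed.

Lemma sum_size_eq (k j : nat) : (\sum_(A : {set 'I_k}) (#|A| == j) = 'C(k, j))%N.
Proof.
rewrite -big_mkcond /= sum1dep_card.
by have := card_draws ('I_k) j; rewrite card_ord => <-; apply: eq_card => A; rewrite inE.
Qed.

Lemma sum_gg k : (\sum_(A : {set 'I_k}) gg #|A| = 3 + 2 * k + 'C(k, 2))%N.
Proof.
rewrite /gg !big_split /= !sum_size_eq bin0 bin1; lia.
Qed.

Lemma key (A : finType) (k : nat) (E : {set A}) (I : A -> {set 'I_k}) :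
  {in E &, injective I} ->
  (3 * #|E| <= 3 + 2 * k + 'C(k, 2) + \sum_(e in E) #|I e|)%N.
Proof.
move=> inj.
have -> : (3 * #|E| = \sum_(e in E) 3)%N by rewrite sum_nat_const mulnC.
apply: (@leq_trans (\sum_(e in E) (#|I e| + gg #|I e|))).
  by apply: leq_sum => e _; apply: gg_ge.
rewrite big_split /= addnC leq_add2r -sum_gg.
rewrite -(big_imset (fun B : {set 'I_k} => gg #|B|) inj) /=.
rewrite [X in (_ <= X)%N](bigID (mem (I @: E))) /=.
by apply: leq_addr.
Qed.

Lemma path_edges_card n (G : rel 'I_n) (p : seq 'I_n) :
  is_gpath G p -> (#|path_edges p| <= n)%N.
Proof.
case: p => [//|x q] /andP [_ U].
apply: (leq_trans (leq_imset_card _ _)).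
apply: (@leq_trans (size (zip (x :: q) (behead (x :: q))))).
  apply: (leq_trans _ (card_size _)); apply: subset_leq_card; apply/subsetP => z; by rewrite !inE.
rewrite size_zip (leq_trans (geq_minl _ _)) //.
by rewrite -(card_uniqP U) -[X in (_ <= X)%N](card_ord n) max_card.
Qed.

Lemma comb n (G : rel 'I_n) (P : seq (seq 'I_n)) :
  strong_separating G P ->
  (3 * #|edges G| <= 3 + 2 * size P + 'C(size P, 2) + size P * n)%N.
Proof.
case=> Hp Hs.
set k := size P.
pose S (i : 'I_k) := path_edges (nth [::] P i).
pose I e := [set i : 'I_k | e \in S i].
have inj : {in edges G &, injective I}.
  move=> e f He Hf eqI; apply/eqP; apply/negPn/negP => nef.
  have [p pP /andP [ep fp]] := Hs e f He Hf nef.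
  have ik : (index p P < k)%N by rewrite index_mem.
  have : Ordinal ik \in I e by rewrite inE /S /= nth_index.
  by rewrite eqI inE /S /= nth_index // (negbTE fp).
apply: (leq_trans (@key _ _ _ I inj)); rewrite leq_add2l.
have -> : (\sum_(e in edges G) #|I e| = \sum_(e in edges G) \sum_(i < k) (e \in S i))%N.
  apply: eq_bigr => e _; rewrite -sum1_card big_mkcond /=; apply: eq_bigr => i _.
  by rewrite inE; case: (e \in S i).
rewrite exchange_big /=; apply: (@leq_trans (\sum_(i < k) n)); last by rewrite sum_nat_const card_ord.
apply: leq_sum => i _.
apply: (@leq_trans #|S i|); last first.
  apply: (@path_edges_card n G); apply: Hp; exact: mem_nth.
rewrite -sum1_card [X in (_ <= X)%N]big_mkcond /=.
rewrite [X in (X <= _)%N]big_mkcond /=; apply: leq_sum => e _.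
by case: (e \in edges G); case: (e \in S i).
Qed.

Local Open Scope ring_scope.

Lemma predn_ge (R : realType) (m : nat) : (m%:R - 1 : R) <= (m.-1)%:R.
Proof. case: m => [|m] /=; first by rewrite subr_le0 ler01. by rewrite -natr1 addrK. Qed.


Theorem proposition2p2 (R : realType) (alpha eps : R) :
  0 < alpha <= 1 -> 0 < eps <= 1 ->
  exists n0 : nat, forall n : nat, (n0 <= n)%N ->
    forall G : rel 'I_n, symmetric G -> irreflexive G ->
    (#|edges G|%:R = alpha * 'C(n, 2)%:R :> R) ->
    forall P : seq (seq 'I_n), strong_separating G P ->
      (Num.sqrt (3 * alpha + 1) - 1 - eps) * n%:R <= (size P)%:R.
Proof.
move=> /andP[a0 a1] /andP[e0 e1].
set s := Num.sqrt (3 * alpha + 1).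
have s2 : s ^+ 2 = 3 * alpha + 1 by rewrite sqr_sqrtr //; lra.
have s0 : 0 <= s by apply: sqrtr_ge0.
exists (Num.truncn (13 / eps)).+1 => n hn G _ _ hE P hP.
have hc := @comb n G P hP.
have hk : (2 * 'C(size P, 2) <= size P * size P)%N.
  by rewrite -mul_bin_diag bin1 leq_mul2l leq_pred orbT.
have hn2 : (2 * 'C(n, 2) = n * n.-1)%N by rewrite -mul_bin_diag bin1.
have hd := predn_ge R n.
have hx : 13 / eps < n%:R.
  apply: (lt_le_trans (truncnS_gt _)); by rewrite ler_nat.
rewrite ltr_pdivrMr // in hx.
set x := n%:R in hd hx *.
set y := (size P)%:R.
set c := 'C(n, 2)%:R : R.
set cc := 'C(size P, 2)%:R : R.
set d := (n.-1)%:R : R.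
set m := #|edges G|%:R : R.
have H1 : 3 * m <= 3 + 2 * y + cc + y * x.
  move: hc; rewrite -(ler_nat R) !natrD !natrM /m /y /cc /x; lra.
have H2 : 2 * cc <= y * y by move: hk; rewrite -(ler_nat R) !natrD !natrM /y /cc; lra.
have H4 : 2 * c = x * d by move: hn2 => /(congr1 (fun z => z%:R : R)); rewrite !natrD !natrM /c /x /d; lra.
have x0 : 0 <= x by apply: ler0n.
have y0 : 0 <= y by apply: ler0n.
have H7 : 3 * alpha * x * (x - 1) <= y ^+ 2 + 2 * x * y + 4 * y + 6.
  have hA : 6 * (alpha * c) <= 6 + 4 * y + y * y + 2 * x * y by rewrite -hE /m; lra.
  have hB : 0 <= alpha * x * (d - (x - 1)) by apply: mulr_ge0; [apply: mulr_ge0; lra| lra].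
  have hC : alpha * (2 * c) = alpha * (x * d) by rewrite H4.
  clear -hA hB hC; lra.
have x1 : 1 <= x by rewrite /x ler1n (leq_trans _ hn).
have s1 : 1 <= s.
  have := @ler_wsqrtr R 1 (3 * alpha + 1); rewrite sqrtr1 => -> //; lra.
have s3 : s <= 2.
  have := @ler_wsqrtr R (3 * alpha + 1) (2 ^+ 2); rewrite sqrtr_sqr ger0_norm // => -> //; lra.
rewrite leNgt; apply/negP => hlt.
have yx : y < x.
  have h := mulr_ge0 (_ : 0 <= 2 - s) x0.
  have h' := mulr_gt0 e0 (_ : 0 < x).
  clear -h h' hlt s3 x1; rewrite -/y in hlt; nra.
have sq : (x + y) ^+ 2 < ((s - eps) * x) ^+ 2.
  have h1 : 0 < (s - eps) * x - (x + y) by lra.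
  have h2 : 0 < (s - eps) * x + (x + y) by lra.
  have := mulr_gt0 h1 h2; clear; lra.
have h3 : eps * x * x < 13 * x.
  have hh : 0 <= eps * x * x * (2 * s - eps - 1).
    apply: mulr_ge0; [apply: mulr_ge0; [apply: mulr_ge0|] |]; lra.
  have ha : 0 <= (1 - alpha) * x by apply: mulr_ge0; lra.
  have hs : s ^+ 2 * x ^+ 2 = (3 * alpha + 1) * x ^+ 2 by rewrite s2.
  clear -hh ha hs sq H7 yx x1; lra.
have : eps * x < 13 by rewrite -(ltr_pM2r (_ : 0 < x)) //; lra.
lra.
Qed.
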